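(* Let $c>0$ and $0<\varepsilon\le\delta<c/100$, and let $z\in\mathbb C$ satisfy $|\operatorname{Re}z|\ge c/\varepsilon$ and $|\operatorname{Im}z|\le\frac12$. Then for every integer $n\ge0$, $$\bigl|\ell^{(n)}_{c,\varepsilon}(z)\bigr|\le n!\,\frac{c\,e^{1.56\sqrt{\delta c}}}{\sinh c}\Bigl(\frac{2\varepsilon}{\delta}\Bigr)^n.$$
   Context: $\ell_c(x)=\frac{c}{\sinh c}\frac{\sin\sqrt{x^2-c^2}}{\sqrt{x^2-c^2}}$ is the Logan function, an entire function of $x\in\mathbb C$ (independent of the choice of square root), and $\ell_{c,\varepsilon}(x)=\ell_c(\varepsilon x)$; $\ell^{(n)}_{c,\varepsilon}$ denotes its $n$-th derivative. *)

(* Defs.v *)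
From Stdlib Require Import Reals Lra.
Open Scope R_scope.

Record Cplx := mkC { re : R; im : R }.

Definition RtoC (a : R) : Cplx := mkC a 0.
Definition Cadd (z w : Cplx) : Cplx := mkC (re z + re w) (im z + im w).
Definition Copp (z : Cplx) : Cplx := mkC (- re z) (- im z).
Definition Csub (z w : Cplx) : Cplx := Cadd z (Copp w).
Definition Cmul (z w : Cplx) : Cplx :=
  mkC (re z * re w - im z * im w) (re z * im w + im z * re w).
Definition Cinv (z : Cplx) : Cplx :=
  mkC (re z / (re z ^ 2 + im z ^ 2)) (- im z / (re z ^ 2 + im z ^ 2)).
Definition Cdiv (z w : Cplx) : Cplx := Cmul z (Cinv w).
Definition Cabs (z : Cplx) : R := sqrt (re z ^ 2 + im z ^ 2).

(* complex sine: sin(a+ib) = sin a cosh b + i cos a sinh b *)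
Definition Csin (z : Cplx) : Cplx :=
  mkC (sin (re z) * cosh (im z)) (cos (re z) * sinh (im z)).

(* principal complex square root (any square root would do, see below) *)
Definition Csqrt (z : Cplx) : Cplx :=
  mkC (sqrt ((Cabs z + re z) / 2))
      ((if Rlt_dec (im z) 0 then -1 else 1) * sqrt ((Cabs z - re z) / 2)).

Definition Csinc (w : Cplx) : Cplx :=
  if Req_EM_T (re w) 0 then
    (if Req_EM_T (im w) 0 then RtoC 1 else Cdiv (Csin w) w)
  else Cdiv (Csin w) w.

Definition logan (c : R) (x : Cplx) : Cplx :=
  Cmul (RtoC (c / sinh c))
       (Csinc (Csqrt (Csub (Cmul x x) (RtoC (c * c))))).

Definition logan_eps (c eps : R) (x : Cplx) : Cplx := logan c (Cmul (RtoC eps) x).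

Definition is_Cderiv (f g : Cplx -> Cplx) : Prop :=
  forall z : Cplx, forall e : R, 0 < e -> exists d : R, 0 < d /\
    forall h : Cplx, h <> RtoC 0 -> Cabs h < d ->
      Cabs (Csub (Cdiv (Csub (f (Cadd z h)) (f z)) h) (g z)) < e.

(* Main.v *)
From Coquelicot Require Import Coquelicot.
From Stdlib Require Import Reals Lra Psatz.
Require Import Defs.
From Stdlib Require Import Arith.
Open Scope R_scope.

Notation C0 := (Complex.RtoC 0).
Definition Cdiff (g g' : Complex.C -> Complex.C) : Prop :=
  forall w e, 0 < e -> exists d, 0 < d /\ forall h : Complex.C, h <> C0 -> Cmod h < d ->
    Cmod ((g (w + h) - g w) / h - g' w)%C < e.

Lemma Cmod_le_sum (x : Complex.C) : Cmod x <= Rabs (fst x) + Rabs (snd x).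
Proof.
  unfold Cmod. apply Rsqr_incr_0_var.
  - rewrite Rsqr_sqrt. 2: nra.
    pose proof (Rabs_pos (fst x)); pose proof (Rabs_pos (snd x)).
    assert (E1: fst x ^ 2 = Rabs (fst x) ^ 2) by (rewrite pow2_abs; auto).
    assert (E2: snd x ^ 2 = Rabs (snd x) ^ 2) by (rewrite pow2_abs; auto).
    rewrite E1, E2. unfold Rsqr. nra.
  - pose proof (Rabs_pos (fst x)); pose proof (Rabs_pos (snd x)); lra.
Qed.

Lemma Cmod_fst (x : Complex.C) : Rabs (fst x) <= Cmod x.
Proof. apply (re_le_Cmod x). Qed.
Lemma Cmod_snd (x : Complex.C) : Rabs (snd x) <= Cmod x.
Proof. pose proof (Rmax_Cmod x). pose proof (Rmax_r (Rabs (fst x)) (Rabs (snd x))). lra. Qed.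

Lemma Cdiff_rem g g' q eta : Cdiff g g' -> 0 < eta -> exists d, 0 < d /\
  forall H : Complex.C, Cmod H < d -> Cmod (g (q + H) - g q - g' q * H)%C <= eta * Cmod H.
Proof.
  intros D Heta. destruct (D q eta Heta) as [d [Hd Hh]].
  exists d. split; auto. intros H HH.
  destruct (Ceq_dec H 0) as [E|E].
  - subst H. replace (q + C0)%C with q.
    2:{ destruct q; unfold Cplus; simpl; f_equal; ring. }
    replace (g q - g q - g' q * C0)%C with C0.
    2:{ apply injective_projections; simpl; ring. }
    rewrite !Cmod_R, Rabs_R0. lra.
  - specialize (Hh H E HH).
    replace (g (q + H) - g q - g' q * H)%C with (((g (q + H) - g q) / H - g' q) * H)%C
      by (field; auto).
    rewrite Cmod_mult. apply Rmult_le_compat_r. apply Cmod_ge_0. lra.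
Qed.

Lemma chain_core g g' (g1 g2 : R -> R) d1 d2 t : Cdiff g g' ->
  derivable_pt_lim g1 t d1 -> derivable_pt_lim g2 t d2 ->
  forall e, 0 < e -> exists dl, 0 < dl /\ forall h, h <> 0 -> Rabs h < dl ->
   Cmod (((g (g1 (t+h)%R, g2 (t+h)%R) - g (g1 t, g2 t)) * Complex.RtoC (/ h))
          - g' (g1 t, g2 t) * (d1, d2))%C < e.
Proof.
  intros D H1 H2 e He.
  set (q := (g1 t, g2 t)).
  set (dv := (d1, d2) : Complex.C).
  set (M := Cmod (g' q)).
  assert (HM : 0 <= M) by apply Cmod_ge_0.
  assert (Hdv : 0 <= Cmod dv) by apply Cmod_ge_0.
  set (e1 := Rmin 1 (e / (4 * (M + 1)))).
  assert (He1 : 0 < e1) by (apply Rmin_pos; [lra| apply Rdiv_lt_0_compat; lra]).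
  assert (He1a : e1 <= 1) by apply Rmin_l.
  assert (He1b : e1 <= e / (4 * (M + 1))) by apply Rmin_r.
  set (eta := e / (4 * (Cmod dv + 3))).
  assert (Heta : 0 < eta) by (apply Rdiv_lt_0_compat; lra).
  destruct (Cdiff_rem g g' q eta D Heta) as [dg [Hdg Hrem]].
  destruct (H1 e1 He1) as [p1 Hp1]. destruct (H2 e1 He1) as [p2 Hp2].
  set (dl := Rmin (Rmin p1 p2) (dg / (Cmod dv + 2))).
  exists dl. split.
  { apply Rmin_pos. apply Rmin_pos; apply cond_pos. apply Rdiv_lt_0_compat; lra. }
  intros h hne hlt.
  assert (hl1 : Rabs h < p1). { eapply Rlt_le_trans. apply hlt. unfold dl.
    eapply Rle_trans; apply Rmin_l. }
  assert (hl2 : Rabs h < p2). { eapply Rlt_le_trans. apply hlt. unfold dl.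
    eapply Rle_trans. apply Rmin_l. apply Rmin_r. }
  assert (hl3 : Rabs h < dg / (Cmod dv + 2)). { eapply Rlt_le_trans. apply hlt. apply Rmin_r. }
  specialize (Hp1 h hne hl1). specialize (Hp2 h hne hl2).
  set (Hc := (g1 (t+h) - g1 t, g2 (t+h) - g2 t) : Complex.C).
  set (V := (Hc * Complex.RtoC (/ h) - dv)%C).
  assert (HV : Cmod V < 2 * e1).
  { eapply Rle_lt_trans. apply Cmod_le_sum.
    unfold V, Hc, dv; simpl.
    replace ((g1 (t + h) - g1 t) * / h - (g2 (t + h) - g2 t) * 0 + - d1)
      with ((g1 (t + h) - g1 t) / h - d1) by (unfold Rdiv; ring).
    replace ((g1 (t + h) - g1 t) * 0 + (g2 (t + h) - g2 t) * / h + - d2)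
      with ((g2 (t + h) - g2 t) / h - d2) by (unfold Rdiv; ring).
    lra. }
  assert (HcV : Hc = ((dv + V) * Complex.RtoC h)%C).
  { unfold V, Hc, dv. apply injective_projections; simpl; field; auto. }
  assert (HHc : Cmod Hc <= Rabs h * (Cmod dv + 2 * e1)).
  { rewrite HcV, Cmod_mult, Cmod_R. rewrite Rmult_comm.
    apply Rmult_le_compat_l. apply Rabs_pos.
    eapply Rle_trans. apply Cmod_triangle. lra. }
  assert (HHc2 : Cmod Hc < dg).
  { eapply Rle_lt_trans. apply HHc.
    assert (Cmod dv + 2 * e1 <= Cmod dv + 2) by lra.
    assert (Rabs h * (Cmod dv + 2) < dg).
    { apply Rlt_div_r in hl3; lra. }
    pose proof (Rabs_pos h). nra. }
  specialize (Hrem Hc HHc2).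
  assert (Eq : (g1 (t + h), g2 (t + h)) = (q + Hc)%C).
  { unfold q, Hc. apply injective_projections; simpl; ring. }
  rewrite Eq. fold q.
  set (Rm := (g (q + Hc) - g q - g' q * Hc)%C) in *.
  replace (((g (q + Hc) - g q) * Complex.RtoC (/ h) - g' q * dv)%C)
    with ((g' q * V + Rm * Complex.RtoC (/ h))%C) by (unfold Rm, V; ring).
  eapply Rle_lt_trans. apply Cmod_triangle.
  rewrite !Cmod_mult, Cmod_R. fold M.
  assert (A1 : M * Cmod V <= M * (2 * e1)).
  { apply Rmult_le_compat_l; lra. }
  assert (A2 : Cmod Rm * Rabs (/ h) <= eta * (Cmod dv + 2 * e1)).
  { rewrite Rabs_inv. 
    assert (0 < Rabs h) by (apply Rabs_pos_lt; auto).
    apply (Rmult_le_reg_r (Rabs h)); auto.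
    rewrite Rmult_assoc, Rinv_l by lra.
    eapply Rle_trans. rewrite Rmult_1_r. apply Hrem.
    pose proof (Cmod_ge_0 Rm). nra. }
  assert (A3 : M * (2 * e1) <= e / 2).
  { assert (M * e1 <= M * (e / (4 * (M + 1)))) by (apply Rmult_le_compat_l; lra).
    assert (M * (e / (4 * (M + 1))) <= e / 4).
    { unfold Rdiv. rewrite Rinv_mult. 
      replace (M * (e * (/ 4 * / (M + 1)))) with ((e / 4) * (M / (M + 1))) by (field; lra).
      assert (M / (M + 1) <= 1). { apply Rmult_le_reg_r with (M+1). lra.
        unfold Rdiv; rewrite Rmult_assoc, Rinv_l by lra. lra. }
      nra. }
    lra. }
  assert (A4 : eta * (Cmod dv + 2 * e1) < e / 2).
  { unfold eta. apply Rle_lt_trans with (e / (4 * (Cmod dv + 3)) * (Cmod dv + 3)).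
    apply Rmult_le_compat_l. apply Rlt_le, Heta. lra.
    replace (e / (4 * (Cmod dv + 3)) * (Cmod dv + 3)) with (e / 4) by (field; lra). lra. }
  lra.
Qed.

Lemma chain g g' (g1 g2 : R -> R) d1 d2 t : Cdiff g g' ->
  is_derive g1 t d1 -> is_derive g2 t d2 ->
  is_derive (fun s => fst (g (g1 s, g2 s))) t (fst (g' (g1 t, g2 t) * (d1, d2))%C) /\
  is_derive (fun s => snd (g (g1 s, g2 s))) t (snd (g' (g1 t, g2 t) * (d1, d2))%C).
Proof.
  intros D H1 H2. apply is_derive_Reals in H1. apply is_derive_Reals in H2.
  pose proof (chain_core g g' g1 g2 d1 d2 t D H1 H2) as K.
  split; apply is_derive_Reals; intros e He; destruct (K e He) as [dl [Hdl Hk]];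
    exists (mkposreal dl Hdl); intros h hne hlt; specialize (Hk h hne hlt).
  - eapply Rle_lt_trans; [|apply Hk]. eapply Rle_trans; [|apply Cmod_fst].
    right. f_equal. simpl. unfold Rdiv. ring.
  - eapply Rle_lt_trans; [|apply Hk]. eapply Rle_trans; [|apply Cmod_snd].
    right. f_equal. simpl. unfold Rdiv. ring.
Qed.

Lemma cos_lip a b : Rabs (cos b - cos a) <= Rabs (b - a).
Proof.
  destruct (MVT_abs cos (fun x => - sin x) a b) as [c [Hc _]].
  { intros; apply derivable_pt_lim_cos. }
  rewrite Hc, Rabs_Ropp. pose proof (Rabs_pos (b - a)).
  assert (Rabs (sin c) <= 1) by (apply Rabs_le; apply SIN_bound).
  nra.
Qed.

Lemma sin_lip a b : Rabs (sin b - sin a) <= Rabs (b - a).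
Proof.
  destruct (MVT_abs sin cos a b) as [c [Hc _]].
  { intros; apply derivable_pt_lim_sin. }
  rewrite Hc. pose proof (Rabs_pos (b - a)).
  assert (Rabs (cos c) <= 1) by (apply Rabs_le; apply COS_bound).
  nra.
Qed.

Lemma Cmod_e v : Cmod (cos v, sin v) = 1.
Proof.
  unfold Cmod; simpl. replace (cos v * (cos v * 1) + sin v * (sin v * 1)) with 1.
  apply sqrt_1. pose proof (sin2_cos2 v). unfold Rsqr in H. lra.
Qed.

Lemma Cdiff_cont g g' : Cdiff g g' -> forall w e, 0 < e -> exists d, 0 < d /\
  forall w', Cmod (w' - w)%C < d -> Cmod (g w' - g w)%C < e.
Proof.
  intros D w e He.
  destruct (Cdiff_rem g g' w 1 D Rlt_0_1) as [d [Hd Hr]].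
  set (A := Cmod (g' w)). assert (HA: 0 <= A) by apply Cmod_ge_0.
  exists (Rmin d (e / (A + 2))). split.
  { apply Rmin_pos; auto. apply Rdiv_lt_0_compat; lra. }
  intros w' Hw. set (H := (w' - w)%C) in *.
  assert (Hl1 : Cmod H < d) by (eapply Rlt_le_trans; [apply Hw| apply Rmin_l]).
  assert (Hl2 : Cmod H < e / (A + 2)) by (eapply Rlt_le_trans; [apply Hw| apply Rmin_r]).
  specialize (Hr H Hl1).
  replace w' with (w + H)%C by (unfold H; ring).
  replace (g (w + H) - g w)%C with ((g (w + H) - g w - g' w * H) + g' w * H)%C by ring.
  eapply Rle_lt_trans. apply Cmod_triangle. rewrite Cmod_mult. fold A.
  assert (0 <= Cmod H) by apply Cmod_ge_0.
  apply Rlt_div_r in Hl2; [|lra].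
  nra.
Qed.

Definition circ (p : Complex.C) (s th : R) : Complex.C :=
  (fst p + s * cos th, snd p + s * sin th).

Lemma circ_dth g g' p s th : Cdiff g g' ->
  is_derive (fun th => fst (g (circ p s th))) th
     (fst (g' (circ p s th) * ((- (s * sin th))%R, (s * cos th)%R))%C) /\
  is_derive (fun th => snd (g (circ p s th))) th
     (snd (g' (circ p s th) * ((- (s * sin th))%R, (s * cos th)%R))%C).
Proof.
  intros D. apply (chain g g' (fun th => fst p + s * cos th) (fun th => snd p + s * sin th)); auto.
  - auto_derive; auto. ring.
  - auto_derive; auto. ring.
Qed.

Lemma circ_ds g g' p s th : Cdiff g g' ->
  is_derive (fun u => fst (g (circ p u th))) s
     (fst (g' (circ p s th) * (cos th, sin th))%C) /\
  is_derive (fun u => snd (g (circ p u th))) s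
     (snd (g' (circ p s th) * (cos th, sin th))%C).
Proof.
  intros D. apply (chain g g' (fun u => fst p + u * cos th) (fun u => snd p + u * sin th)); auto.
  - auto_derive; auto. ring.
  - auto_derive; auto. ring.
Qed.

Lemma circ_cont g g' p s th : Cdiff g g' ->
  continuous (fun th => fst (g (circ p s th))) th /\
  continuous (fun th => snd (g (circ p s th))) th.
Proof.
  intros D. destruct (circ_dth g g' p s th D) as [A B].
  split.
  - apply (ex_derive_continuous (K:=R_AbsRing) (V:=R_NormedModule) (fun th => fst (g (circ p s th)))).
    eexists; eauto.
  - apply (ex_derive_continuous (K:=R_AbsRing) (V:=R_NormedModule) (fun th => snd (g (circ p s th)))).
    eexists; eauto.
Qed.

Lemma cont2d_core g g' p u0 v0 : Cdiff g g' -> forall eps, 0 < eps ->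
  exists dl, 0 < dl /\ forall u v, Rabs (u - u0) < dl -> Rabs (v - v0) < dl ->
  Cmod (g (circ p u v) * (cos v, sin v) - g (circ p u0 v0) * (cos v0, sin v0))%C < eps.
Proof.
  intros D eps Heps.
  set (w0 := circ p u0 v0). set (A := Cmod (g w0)).
  assert (HA : 0 <= A) by apply Cmod_ge_0.
  destruct (Cdiff_cont g g' D w0 (eps / 2)) as [rho [Hrho Hc]]; [lra|].
  set (k := Rmin (rho / (4 * (Rabs u0 + 1))) (eps / (4 * (A + 1)))).
  assert (Hk : 0 < k).
  { pose proof (Rabs_pos u0). apply Rmin_pos; apply Rdiv_lt_0_compat; lra. }
  assert (Hk1 : k <= rho / (4 * (Rabs u0 + 1))) by apply Rmin_l.
  assert (Hk2 : k <= eps / (4 * (A + 1))) by apply Rmin_r.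
  exists (Rmin k (rho / 4)). split. { apply Rmin_pos; lra. }
  intros u v Hu Hv.
  assert (Hv' : Rabs (v - v0) < k) by (eapply Rlt_le_trans; [apply Hv|apply Rmin_l]).
  assert (Hu' : Rabs (u - u0) < rho / 4) by (eapply Rlt_le_trans; [apply Hu|apply Rmin_r]).
  pose proof (cos_lip v0 v) as Lc. pose proof (sin_lip v0 v) as Ls.
  set (w := circ p u v).
  set (e := (cos v, sin v) : Complex.C). set (e0 := (cos v0, sin v0) : Complex.C).
  assert (Hee : Cmod (e - e0)%C <= 2 * k).
  { eapply Rle_trans. apply Cmod_le_sum. simpl.
    replace (cos v + - cos v0) with (cos v - cos v0) by ring.
    replace (sin v + - sin v0) with (sin v - sin v0) by ring. lra. }
  assert (Hww : Cmod (w - w0)%C < rho).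
  { eapply Rle_lt_trans. apply Cmod_le_sum. unfold w, w0, circ; simpl.
    replace (fst p + u * cos v + - (fst p + u0 * cos v0))
      with ((u - u0) * cos v + u0 * (cos v - cos v0)) by ring.
    replace (snd p + u * sin v + - (snd p + u0 * sin v0))
      with ((u - u0) * sin v + u0 * (sin v - sin v0)) by ring.
    assert (T1 : Rabs ((u - u0) * cos v + u0 * (cos v - cos v0)) <= Rabs (u - u0) + Rabs u0 * k).
    { eapply Rle_trans. apply Rabs_triang. rewrite !Rabs_mult.
      assert (Rabs (cos v) <= 1) by (apply Rabs_le; apply COS_bound).
      pose proof (Rabs_pos (u - u0)). pose proof (Rabs_pos u0). nra. }
    assert (T2 : Rabs ((u - u0) * sin v + u0 * (sin v - sin v0)) <= Rabs (u - u0) + Rabs u0 * k).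
    { eapply Rle_trans. apply Rabs_triang. rewrite !Rabs_mult.
      assert (Rabs (sin v) <= 1) by (apply Rabs_le; apply SIN_bound).
      pose proof (Rabs_pos (u - u0)). pose proof (Rabs_pos u0). nra. }
    assert (Rabs u0 * k <= rho / 4).
    { pose proof (Rabs_pos u0).
      apply Rle_trans with (Rabs u0 * (rho / (4 * (Rabs u0 + 1)))).
      apply Rmult_le_compat_l; lra.
      replace (Rabs u0 * (rho / (4 * (Rabs u0 + 1)))) with ((rho / 4) * (Rabs u0 / (Rabs u0 + 1))) by (field; lra).
      assert (Rabs u0 / (Rabs u0 + 1) <= 1).
      { apply Rmult_le_reg_r with (Rabs u0 + 1). lra.
        unfold Rdiv; rewrite Rmult_assoc, Rinv_l by lra. lra. }
      nra. }
    lra. }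
  specialize (Hc w Hww).
  replace (g w * e - g w0 * e0)%C with ((g w - g w0) * e + g w0 * (e - e0))%C by ring.
  eapply Rle_lt_trans. apply Cmod_triangle. rewrite !Cmod_mult.
  unfold e at 1. rewrite Cmod_e. fold A.
  assert (A * Cmod (e - e0)%C <= A * (2 * k)) by (apply Rmult_le_compat_l; lra).
  assert (A * k <= eps / 4).
  { apply Rle_trans with (A * (eps / (4 * (A + 1)))).
    apply Rmult_le_compat_l; lra.
    replace (A * (eps / (4 * (A + 1)))) with ((eps / 4) * (A / (A + 1))) by (field; lra).
    assert (A / (A + 1) <= 1).
    { apply Rmult_le_reg_r with (A + 1). lra.
      unfold Rdiv; rewrite Rmult_assoc, Rinv_l by lra. lra. }
    nra. }
  lra.
Qed.

Lemma cont2d g g' p u0 v0 : Cdiff g g' ->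
  continuity_2d_pt (fun u v => fst (g (circ p u v) * (cos v, sin v))%C) u0 v0 /\
  continuity_2d_pt (fun u v => snd (g (circ p u v) * (cos v, sin v))%C) u0 v0.
Proof.
  intros D. split; intros eps; destruct (cont2d_core g g' p u0 v0 D eps (cond_pos eps)) as [dl [Hdl H]];
  exists (mkposreal dl Hdl); intros u v Hu Hv; specialize (H u v Hu Hv).
  - eapply Rle_lt_trans; [|apply H]. eapply Rle_trans; [|apply Cmod_fst]. right. f_equal.
  - eapply Rle_lt_trans; [|apply H]. eapply Rle_trans; [|apply Cmod_snd]. right. f_equal.
Qed.

Lemma cmul (f g : R -> R) x : continuous f x -> continuous g x -> continuous (fun x => f x * g x) x.
Proof. intros. apply (continuous_mult f g); auto. Qed.
Lemma cplus (f g : R -> R) x : continuous f x -> continuous g x -> continuous (fun x => f x + g x) x.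
Proof. intros. apply (continuous_plus f g); auto. Qed.
Lemma copp (f : R -> R) x : continuous f x -> continuous (fun x => - f x) x.
Proof. intros. apply (continuous_opp f); auto. Qed.
Lemma cminus (f g : R -> R) x : continuous f x -> continuous g x -> continuous (fun x => f x - g x) x.
Proof. intros. unfold Rminus. apply cplus; auto. apply copp; auto. Qed.
Lemma ccst (c : R) x : continuous (fun _ : R => c) x.
Proof. apply continuous_const. Qed.
Lemma cid x : continuous (fun x : R => x) x.
Proof. apply continuous_id. Qed.
Lemma ccos (f : R -> R) x : continuous f x -> continuous (fun x => cos (f x)) x.
Proof. apply continuous_cos_comp. Qed.
Lemma csin (f : R -> R) x : continuous f x -> continuous (fun x => sin (f x)) x.
Proof. apply continuous_sin_comp. Qed.
Lemma ccos' x : continuous cos x. Proof. apply continuous_cos. Qed.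
Lemma csin' x : continuous sin x. Proof. apply continuous_sin. Qed.

Lemma cscal c x : continuous (Rmult c) x.
Proof. change (continuous (fun y => c * y) x). apply cmul. apply ccst. apply cid. Qed.

Ltac cont := repeat match goal with
 | |- continuous (Rmult _) _ => apply cscal
 | |- continuous (fun x => _ - _) _ => apply cminus
 | |- continuous (fun x => _ + _) _ => apply cplus
 | |- continuous (fun x => _ * _) _ => apply cmul
 | |- continuous (fun x => - _) _ => apply copp
 | |- continuous (fun x => cos _) _ => apply ccos
 | |- continuous (fun x => sin _) _ => apply csin
 | |- continuous cos _ => apply ccos'
 | |- continuous sin _ => apply csin'
 | |- continuous (fun x => x) _ => apply cid
 | |- continuous (fun x => ?c) _ => apply ccst
 | |- continuous _ _ => assumption
 | H : forall t, continuous ?f t |- continuous ?f _ => apply H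
 end.

Lemma circ0 p t : circ p 0 t = p.
Proof. unfold circ. apply injective_projections; simpl; ring. Qed.

Lemma circ_2PI p u : circ p u (2 * PI) = circ p u 0.
Proof. unfold circ. rewrite cos_2PI, sin_2PI, cos_0, sin_0. reflexivity. Qed.

Lemma int_zero g g' g'' p u : Cdiff g g' -> Cdiff g' g'' ->
  RInt (fun t => fst (g' (circ p u t) * (cos t, sin t))%C) 0 (2 * PI) = 0 /\
  RInt (fun t => snd (g' (circ p u t) * (cos t, sin t))%C) 0 (2 * PI) = 0.
Proof.
  intros D D'.
  assert (Hc : forall t, continuous (fun t => fst (g' (circ p u t))) t /\
                         continuous (fun t => snd (g' (circ p u t))) t)
    by (intros; eapply circ_cont; eauto).
  destruct (Req_dec u 0) as [Hu|Hu].
  - subst u. set (a := g' p).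
    split.
    + assert (HI : is_RInt (fun t => fst a * cos t - snd a * sin t) 0 (2 * PI)
         (minus ((fun t => fst a * sin t + snd a * cos t) (2 * PI))
                ((fun t => fst a * sin t + snd a * cos t) 0))).
      { apply (is_RInt_derive (fun t => fst a * sin t + snd a * cos t)).
        - intros. auto_derive; auto. ring.
        - intros. cont. }
      rewrite (RInt_ext _ (fun t => fst a * cos t - snd a * sin t)).
      2:{ intros. rewrite circ0. fold a. simpl. ring. }
      rewrite (is_RInt_unique _ _ _ _ HI).
      simpl. rewrite sin_2PI, cos_2PI, sin_0, cos_0. unfold minus, plus, opp; simpl. ring.
    + assert (HI : is_RInt (fun t => fst a * sin t + snd a * cos t) 0 (2 * PI)
         (minus ((fun t => - fst a * cos t + snd a * sin t) (2 * PI))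
                ((fun t => - fst a * cos t + snd a * sin t) 0))).
      { apply (is_RInt_derive (fun t => - fst a * cos t + snd a * sin t)).
        - intros. auto_derive; auto. ring.
        - intros. cont. }
      rewrite (RInt_ext _ (fun t => fst a * sin t + snd a * cos t)).
      2:{ intros. rewrite circ0. fold a. simpl. ring. }
      rewrite (is_RInt_unique _ _ _ _ HI).
      simpl. rewrite sin_2PI, cos_2PI, sin_0, cos_0. unfold minus, plus, opp; simpl. ring.
  - split.
    + assert (HI : is_RInt (fun t => fst (g' (circ p u t) * (cos t, sin t))%C) 0 (2 * PI)
         (minus ((fun t => / u * snd (g (circ p u t))) (2 * PI))
                ((fun t => / u * snd (g (circ p u t))) 0))).
      { apply (is_RInt_derive (fun t => / u * snd (g (circ p u t)))).
        * intros x _. destruct (circ_dth g g' p u x D) as [_ B].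
          pose proof (is_derive_scal _ _ (/ u) _ B) as B'.
          match goal with |- is_derive _ _ ?v => replace v with
            (/ u * snd (g' (circ p u x) * ((- (u * sin x))%R, (u * cos x)%R))%C) end; auto.
          simpl. field. auto.
        * intros x _. simpl. destruct (Hc x). cont. }
      rewrite (is_RInt_unique _ _ _ _ HI).
      simpl. rewrite circ_2PI. unfold minus, plus, opp; simpl. ring.
    + assert (HI : is_RInt (fun t => snd (g' (circ p u t) * (cos t, sin t))%C) 0 (2 * PI)
         (minus ((fun t => - / u * fst (g (circ p u t))) (2 * PI))
                ((fun t => - / u * fst (g (circ p u t))) 0))).
      { apply (is_RInt_derive (fun t => - / u * fst (g (circ p u t)))).
        * intros x _. destruct (circ_dth g g' p u x D) as [B _].
          pose proof (is_derive_scal _ _ (- / u) _ B) as B'.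
          match goal with |- is_derive _ _ ?v => replace v with
            (- / u * fst (g' (circ p u x) * ((- (u * sin x))%R, (u * cos x)%R))%C) end; auto.
          simpl. field. auto.
        * intros x _. simpl. destruct (Hc x). cont. }
      rewrite (is_RInt_unique _ _ _ _ HI).
      simpl. rewrite circ_2PI. unfold minus, plus, opp; simpl. ring.
Qed.

Lemma const_R (Phi : R -> R) : (forall u, is_derive Phi u 0) -> forall s, Phi s = Phi 0.
Proof.
  intros H s. destruct (Rtotal_order s 0) as [Hs|[Hs|Hs]].
  - apply (eq_is_derive Phi s 0). intros; apply H. exact Hs.
  - rewrite Hs; reflexivity.
  - symmetry. apply (eq_is_derive Phi 0 s). intros; apply H. exact Hs.
Qed.

Lemma MVP g g' g'' p s : Cdiff g g' -> Cdiff g' g'' ->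
  RInt (fun th => fst (g (circ p s th))) 0 (2 * PI) = 2 * PI * fst (g p) /\
  RInt (fun th => snd (g (circ p s th))) 0 (2 * PI) = 2 * PI * snd (g p).
Proof.
  intros D D'. split.
  - rewrite (const_R (fun u => RInt (fun th => fst (g (circ p u th))) 0 (2 * PI))).
    + rewrite (RInt_ext _ (fun _ => fst (g p))).
      2:{ intros. rewrite circ0. auto. }
      rewrite RInt_const. unfold scal; simpl. unfold mult; simpl. ring.
    + intros u.
      assert (Hp := is_derive_RInt_param (fun u th => fst (g (circ p u th))) 0 (2*PI) u).
      assert (E: RInt (fun t => Derive (fun u0 => fst (g (circ p u0 t))) u) 0 (2*PI) = 0).
      { rewrite (RInt_ext _ (fun t => fst (g' (circ p u t) * (cos t, sin t))%C)).
        apply (int_zero g g' g'' p u D D').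
        intros. apply is_derive_unique. apply circ_ds; auto. }
      cbv beta in Hp.
      match type of E with RInt ?f _ _ = _ => 
        cut (is_derive (fun x : R_AbsRing => RInt (fun t : R => fst (g (circ p x t))) 0 (2 * PI)) u (RInt f 0 (2*PI))) end.
      { rewrite E. auto. }
      apply Hp.
      * apply filter_forall. intros x t _. eexists. exact (proj1 (circ_ds g g' p x t D)).
      * intros. apply continuity_2d_pt_ext with (fun u v => fst (g' (circ p u v) * (cos v, sin v))%C).
        intros; symmetry; apply is_derive_unique; apply circ_ds; auto.
        apply (cont2d g' g''); auto.
      * apply filter_forall. intros x. apply (ex_RInt_continuous (V:=R_CompleteNormedModule)). intros t _.
        exact (proj1 (circ_cont g g' p x t D)).
  - rewrite (const_R (fun u => RInt (fun th => snd (g (circ p u th))) 0 (2 * PI))).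
    + rewrite (RInt_ext _ (fun _ => snd (g p))).
      2:{ intros. rewrite circ0. auto. }
      rewrite RInt_const. unfold scal; simpl. unfold mult; simpl. ring.
    + intros u.
      assert (Hp := is_derive_RInt_param (fun u th => snd (g (circ p u th))) 0 (2*PI) u).
      assert (E: RInt (fun t => Derive (fun u0 => snd (g (circ p u0 t))) u) 0 (2*PI) = 0).
      { rewrite (RInt_ext _ (fun t => snd (g' (circ p u t) * (cos t, sin t))%C)).
        apply (int_zero g g' g'' p u D D').
        intros. apply is_derive_unique. apply circ_ds; auto. }
      cbv beta in Hp.
      match type of E with RInt ?f _ _ = _ => 
        cut (is_derive (fun x : R_AbsRing => RInt (fun t : R => snd (g (circ p x t))) 0 (2 * PI)) u (RInt f 0 (2*PI))) end.
      { rewrite E. auto. }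
      apply Hp.
      * apply filter_forall. intros x t _. eexists. exact (proj2 (circ_ds g g' p x t D)).
      * intros. apply continuity_2d_pt_ext with (fun u v => snd (g' (circ p u v) * (cos v, sin v))%C).
        intros; symmetry; apply is_derive_unique; apply circ_ds; auto.
        apply (cont2d g' g''); auto.
      * apply filter_forall. intros x. apply (ex_RInt_continuous (V:=R_CompleteNormedModule)). intros t _.
        exact (proj2 (circ_cont g g' p x t D)).
Qed.

Definition E (n : nat) (th : R) : Complex.C := (cos (INR n * th), - sin (INR n * th)).

Lemma trigE n th : cos (INR n * th) = cos th * cos (INR (S n) * th) + sin th * sin (INR (S n) * th) /\
   sin (INR n * th) = cos th * sin (INR (S n) * th) - sin th * cos (INR (S n) * th).
Proof.
  rewrite S_INR. replace ((INR n + 1) * th) with (INR n * th + th) by ring.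
  rewrite cos_plus, sin_plus. pose proof (sin2_cos2 th). unfold Rsqr in H.
  set (A := INR n * th). split.
  - transitivity (cos A * (sin th * sin th + cos th * cos th)). rewrite H; ring. ring.
  - transitivity (sin A * (sin th * sin th + cos th * cos th)). rewrite H; ring. ring.
Qed.

Lemma dmul (f h : R -> R) x f' h' : is_derive f x f' -> is_derive h x h' ->
  is_derive (fun x => f x * h x) x (f' * h x + f x * h').
Proof. intros A B. apply (is_derive_mult f h x f' h' A B). intros; apply Rmult_comm. Qed.
Lemma dplus (f h : R -> R) x f' h' : is_derive f x f' -> is_derive h x h' ->
  is_derive (fun x => f x + h x) x (f' + h').
Proof. intros A B. apply (is_derive_plus f h x f' h' A B). Qed.

Lemma E_2PI n : E n (2 * PI) = E n 0.
Proof.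
  unfold E. replace (INR n * (2 * PI)) with (0 + 2 * INR n * PI) by ring.
  rewrite cos_period, sin_period. rewrite Rmult_0_r. reflexivity.
Qed.

Lemma recur g g' g'' p r n : Cdiff g g' -> Cdiff g' g'' ->
  INR (S n) * RInt (fun th => fst (g (circ p r th) * E (S n) th)%C) 0 (2 * PI)
    = r * RInt (fun th => fst (g' (circ p r th) * E n th)%C) 0 (2 * PI) /\
  INR (S n) * RInt (fun th => snd (g (circ p r th) * E (S n) th)%C) 0 (2 * PI)
    = r * RInt (fun th => snd (g' (circ p r th) * E n th)%C) 0 (2 * PI).
Proof.
  intros D D'.
  set (k := INR (S n)).
  set (P1 := fun th => fst (g (circ p r th) * E (S n) th)%C).
  set (P2 := fun th => snd (g (circ p r th) * E (S n) th)%C).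
  set (Q1 := fun th => fst (g' (circ p r th) * E n th)%C).
  set (Q2 := fun th => snd (g' (circ p r th) * E n th)%C).
  assert (Cg : forall t, continuous (fun t => fst (g (circ p r t))) t /\
                         continuous (fun t => snd (g (circ p r t))) t)
    by (intros; eapply circ_cont; eauto).
  assert (Cg' : forall t, continuous (fun t => fst (g' (circ p r t))) t /\
                         continuous (fun t => snd (g' (circ p r t))) t)
    by (intros; eapply circ_cont; eauto).
  assert (CP1 : forall t, continuous P1 t).
  { intros t. destruct (Cg t). unfold P1, E. cbn [Cmult fst snd]. cont. }
  assert (CP2 : forall t, continuous P2 t).
  { intros t. destruct (Cg t). unfold P2, E. cbn [Cmult fst snd]. cont. }
  assert (CQ1 : forall t, continuous Q1 t).
  { intros t. destruct (Cg' t). unfold Q1, E. cbn [Cmult fst snd]. cont. }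
  assert (CQ2 : forall t, continuous Q2 t).
  { intros t. destruct (Cg' t). unfold Q2, E. cbn [Cmult fst snd]. cont. }
  assert (DP1 : forall t, is_derive P1 t (k * P2 t - r * Q2 t)).
  { intros t. destruct (circ_dth g g' p r t D) as [A B].
    assert (Eq : forall th, (fun th => fst (g (circ p r th)) * cos (k * th)
                                 + snd (g (circ p r th)) * sin (k * th)) th = P1 th).
    { intros. unfold P1, E. cbn [Cmult fst snd]. fold k. ring. }
    apply (is_derive_ext _ P1 t _ Eq).
    evar (v : R). replace (k * P2 t - r * Q2 t) with v. apply dplus; apply dmul; eauto.
    auto_derive; auto. auto_derive; auto.
    unfold v, P2, Q2, E. cbn [Cmult fst snd]. destruct (trigE n t) as [T1 T2].
    rewrite T1, T2. fold k. ring. }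
  assert (DP2 : forall t, is_derive P2 t (r * Q1 t - k * P1 t)).
  { intros t. destruct (circ_dth g g' p r t D) as [A B].
    assert (Eq : forall th, (fun th => fst (g (circ p r th)) * (- sin (k * th))
                                 + snd (g (circ p r th)) * cos (k * th)) th = P2 th).
    { intros. unfold P2, E. cbn [Cmult fst snd]. fold k. ring. }
    apply (is_derive_ext _ P2 t _ Eq).
    evar (v : R). replace (r * Q1 t - k * P1 t) with v. apply dplus; apply dmul; eauto.
    auto_derive; auto. auto_derive; auto.
    unfold v, P1, Q1, E. cbn [Cmult fst snd]. destruct (trigE n t) as [T1 T2].
    rewrite T1, T2. fold k. ring. }
  assert (XP1 : ex_RInt P1 0 (2 * PI)) by (apply (ex_RInt_continuous (V:=R_CompleteNormedModule)); intros; auto).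
  assert (XP2 : ex_RInt P2 0 (2 * PI)) by (apply (ex_RInt_continuous (V:=R_CompleteNormedModule)); intros; auto).
  assert (XQ1 : ex_RInt Q1 0 (2 * PI)) by (apply (ex_RInt_continuous (V:=R_CompleteNormedModule)); intros; auto).
  assert (XQ2 : ex_RInt Q2 0 (2 * PI)) by (apply (ex_RInt_continuous (V:=R_CompleteNormedModule)); intros; auto).
  assert (IP1 := is_RInt_derive P1 (fun t => k * P2 t - r * Q2 t) 0 (2 * PI)
                  (fun t _ => DP1 t) (fun t _ => ltac:(cont))).
  assert (IP2 := is_RInt_derive P2 (fun t => r * Q1 t - k * P1 t) 0 (2 * PI)
                  (fun t _ => DP2 t) (fun t _ => ltac:(cont))).
  apply is_RInt_unique in IP1. apply is_RInt_unique in IP2.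
  unfold P1 in IP1. unfold P2 in IP2. rewrite circ_2PI, E_2PI in IP1, IP2.
  unfold minus, plus, opp in IP1, IP2; simpl in IP1, IP2.
  rewrite Rplus_opp_r in IP1, IP2.
  assert (L1 : RInt (fun t => k * P2 t - r * Q2 t) 0 (2 * PI) = k * RInt P2 0 (2 * PI) - r * RInt Q2 0 (2 * PI)).
  { apply is_RInt_unique.
    apply (is_RInt_minus (V:=R_NormedModule) (fun t => k * P2 t) (fun t => r * Q2 t));
      apply (is_RInt_scal (V:=R_NormedModule)); apply (RInt_correct (V:=R_CompleteNormedModule)); auto. }
  assert (L2 : RInt (fun t => r * Q1 t - k * P1 t) 0 (2 * PI) = r * RInt Q1 0 (2 * PI) - k * RInt P1 0 (2 * PI)).
  { apply is_RInt_unique.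
    apply (is_RInt_minus (V:=R_NormedModule) (fun t => r * Q1 t) (fun t => k * P1 t));
      apply (is_RInt_scal (V:=R_NormedModule)); apply (RInt_correct (V:=R_CompleteNormedModule)); auto. }
  fold P1 P2 Q1 Q2. split; lra.
Qed.

Lemma vint (u v : R -> R) a b M : a <= b -> (forall t, continuous u t) -> (forall t, continuous v t) ->
  0 <= M -> (forall t, u t ^ 2 + v t ^ 2 <= M ^ 2) ->
  sqrt ((RInt u a b) ^ 2 + (RInt v a b) ^ 2) <= (b - a) * M.
Proof.
  intros Hab Cu Cv HM Hp.
  assert (Xu : ex_RInt u a b) by (apply (ex_RInt_continuous (V:=R_CompleteNormedModule)); intros; auto).
  assert (Xv : ex_RInt v a b) by (apply (ex_RInt_continuous (V:=R_CompleteNormedModule)); intros; auto).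
  set (A := RInt u a b). set (B := RInt v a b).
  set (L := sqrt (A ^ 2 + B ^ 2)).
  assert (HL : 0 <= L) by apply sqrt_pos.
  assert (HL2 : L * L = A ^ 2 + B ^ 2) by (apply sqrt_sqrt; nra).
  assert (Hint : RInt (fun t => A * u t + B * v t) a b = A ^ 2 + B ^ 2).
  { apply is_RInt_unique.
    replace (A ^ 2 + B ^ 2) with (A * A + B * B) by ring.
    apply (is_RInt_plus (V:=R_NormedModule) (fun t => A * u t) (fun t => B * v t));
      apply (is_RInt_scal (V:=R_NormedModule)); apply (RInt_correct (V:=R_CompleteNormedModule)); auto. }
  assert (Hle : RInt (fun t => A * u t + B * v t) a b <= RInt (fun _ => L * M) a b).
  { apply RInt_le; auto.
    - apply (ex_RInt_continuous (V:=R_CompleteNormedModule)); intros.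
      apply cplus; apply cmul; auto; apply ccst.
    - apply ex_RInt_const.
    - intros t _. specialize (Hp t).
      set (S1 := sqrt (u t ^ 2 + v t ^ 2)).
      assert (HS : 0 <= S1) by apply sqrt_pos.
      assert (HS2 : S1 * S1 = u t ^ 2 + v t ^ 2) by (apply sqrt_sqrt; nra).
      assert (HSM : S1 <= M).
      { unfold S1. rewrite <- (sqrt_pow2 M HM). apply sqrt_le_1_alt. lra. }
      assert (A * u t + B * v t <= L * S1).
      { destruct (Rle_dec (A * u t + B * v t) 0). nra.
        apply Rsqr_incr_0_var. unfold Rsqr.
        replace (L * S1 * (L * S1)) with ((L * L) * (S1 * S1)) by ring.
        rewrite HL2, HS2. pose proof (pow2_ge_0 (A * v t - B * u t)). nra. nra. }
      nra. }
  rewrite Hint, RInt_const in Hle. unfold scal in Hle; simpl in Hle; unfold mult in Hle; simpl in Hle.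
  fold L. destruct (Req_dec L 0) as [E0|E0]. rewrite E0. nra.
  apply Rmult_le_reg_l with L. lra. nra.
Qed.

Lemma Cmod_E n th : Cmod (E n th) = 1.
Proof.
  unfold E, Cmod; simpl. replace (cos (INR n * th) * (cos (INR n * th) * 1) + - sin (INR n * th) * (- sin (INR n * th) * 1)) with 1.
  apply sqrt_1. pose proof (sin2_cos2 (INR n * th)). unfold Rsqr in H. lra.
Qed.

Lemma iter_formula (G : nat -> Complex.C -> Complex.C) (HD : forall k, Cdiff (G k) (G (S k))) p r :
  forall n m,
  RInt (fun th => fst (G m (circ p r th) * E n th)%C) 0 (2 * PI)
    = r ^ n / INR (fact n) * RInt (fun th => fst (G (m + n)%nat (circ p r th) * E 0 th)%C) 0 (2 * PI) /\
  RInt (fun th => snd (G m (circ p r th) * E n th)%C) 0 (2 * PI)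
    = r ^ n / INR (fact n) * RInt (fun th => snd (G (m + n)%nat (circ p r th) * E 0 th)%C) 0 (2 * PI).
Proof.
  induction n as [|n IH]; intros m.
  - rewrite Nat.add_0_r. replace (r ^ 0 / INR (fact 0)) with 1 by (simpl; field).
    split; symmetry; apply Rmult_1_l.
  - destruct (recur (G m) (G (S m)) (G (S (S m))) p r n (HD m) (HD (S m))) as [R1 R2].
    destruct (IH (S m)) as [I1 I2].
    rewrite I1 in R1. rewrite I2 in R2.
    replace (S m + n)%nat with (m + S n)%nat in R1, R2 by lia.
    assert (HF : INR (fact (S n)) = INR (S n) * INR (fact n)) by (rewrite fact_simpl, mult_INR; auto).
    assert (H1 : 0 < INR (fact n)) by (apply lt_0_INR; apply lt_O_fact).
    assert (H2 : 0 < INR (S n)) by (apply lt_0_INR; lia).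
    rewrite HF. simpl pow. split.
    + apply Rmult_eq_reg_l with (INR (S n)); [|lra]. rewrite R1. field. lra.
    + apply Rmult_eq_reg_l with (INR (S n)); [|lra]. rewrite R2. field. lra.
Qed.

Lemma cauchy (G : nat -> Complex.C -> Complex.C) (HD : forall k, Cdiff (G k) (G (S k))) p r M :
  0 < r -> 0 <= M -> (forall th, Cmod (G 0%nat (circ p r th)) <= M) ->
  forall n, Cmod (G n p) <= INR (fact n) * M / r ^ n.
Proof.
  intros Hr HM HB n.
  destruct (iter_formula G HD p r n 0) as [I1 I2]. rewrite Nat.add_0_l in I1, I2.
  destruct (MVP (G n) (G (S n)) (G (S (S n))) p r (HD n) (HD (S n))) as [M1 M2].
  assert (E0 : forall k th, (G k (circ p r th) * E 0 th)%C = G k (circ p r th)).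
  { intros. unfold E. rewrite Rmult_0_l, cos_0, sin_0.
    apply injective_projections; simpl; ring. }
  rewrite (RInt_ext (fun th => fst (G n (circ p r th) * E 0 th)%C) (fun th => fst (G n (circ p r th)))) in I1 by (intros; rewrite E0; auto).
  rewrite (RInt_ext (fun th => snd (G n (circ p r th) * E 0 th)%C) (fun th => snd (G n (circ p r th)))) in I2 by (intros; rewrite E0; auto).
  rewrite M1 in I1. rewrite M2 in I2.
  set (J1 := RInt (fun th => fst (G 0%nat (circ p r th) * E n th)%C) 0 (2 * PI)) in *.
  set (J2 := RInt (fun th => snd (G 0%nat (circ p r th) * E n th)%C) 0 (2 * PI)) in *.
  assert (Hrn : 0 < r ^ n) by (apply pow_lt; auto).
  assert (Hf : 0 < INR (fact n)) by (apply lt_0_INR; apply lt_O_fact).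
  pose proof PI_RGT_0 as Hpi.
  set (c := INR (fact n) / (2 * PI * r ^ n)).
  assert (Hc : 0 < c) by (unfold c; apply Rdiv_lt_0_compat; nra).
  assert (F1 : fst (G n p) = c * J1) by (unfold c; rewrite I1; field; lra).
  assert (F2 : snd (G n p) = c * J2) by (unfold c; rewrite I2; field; lra).
  assert (HV : sqrt (J1 ^ 2 + J2 ^ 2) <= (2 * PI - 0) * M).
  { apply vint; auto. lra.
    - intros t. destruct (circ_cont (G 0%nat) (G 1%nat) p r t (HD 0%nat)).
      unfold E; cbn [Cmult fst snd]. cont.
    - intros t. destruct (circ_cont (G 0%nat) (G 1%nat) p r t (HD 0%nat)).
      unfold E; cbn [Cmult fst snd]. cont.
    - intros t. 
      assert (Cmod (G 0%nat (circ p r t) * E n t)%C <= M).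
      { rewrite Cmod_mult, Cmod_E, Rmult_1_r. auto. }
      assert (Heq : Cmod (G 0%nat (circ p r t) * E n t)%C ^ 2 =
         fst (G 0%nat (circ p r t) * E n t)%C ^ 2 + snd (G 0%nat (circ p r t) * E n t)%C ^ 2).
      { unfold Cmod. rewrite pow2_sqrt. auto. nra. }
      rewrite <- Heq. pose proof (Cmod_ge_0 (G 0%nat (circ p r t) * E n t)%C). nra. }
  unfold Cmod. rewrite F1, F2.
  replace ((c * J1) ^ 2 + (c * J2) ^ 2) with (c ^ 2 * (J1 ^ 2 + J2 ^ 2)) by ring.
  rewrite sqrt_mult_alt, sqrt_pow2 by nra.
  apply Rle_trans with (c * ((2 * PI - 0) * M)). apply Rmult_le_compat_l; lra.
  right. unfold c. field. lra.
Qed.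

Lemma sinh_bound b : sinh b ^ 2 <= b ^ 2 * exp (2 * Rabs b).
Proof.
  set (t := Rabs b). assert (Ht : 0 <= t) by apply Rabs_pos.
  assert (Hb2 : b ^ 2 = t ^ 2) by (unfold t; rewrite pow2_abs; auto).
  set (X := exp t). set (Y := exp (- t)).
  assert (HX : 0 < X) by apply exp_pos. assert (HY : 0 < Y) by apply exp_pos.
  assert (HXY : X * Y = 1) by (unfold X, Y; rewrite <- exp_plus, Rplus_opp_r, exp_0; auto).
  assert (HE2 : exp (2 * t) = X * X) by (unfold X; rewrite <- exp_plus; f_equal; ring).
  assert (HY2 : 1 - 2 * t <= Y * Y).
  { unfold Y. rewrite <- exp_plus. replace (- t + - t) with (- (2 * t)) by ring.
    pose proof (exp_ineq1_le (- (2 * t))). lra. }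
  assert (HS : (sinh b) ^ 2 = ((X - Y) / 2) ^ 2).
  { unfold sinh. unfold t in X, Y. destruct (Rle_dec 0 b).
    - unfold X, Y. rewrite Rabs_right by lra. auto.
    - unfold X, Y. rewrite Rabs_left by lra. rewrite Ropp_involutive. field. }
  rewrite HS, Hb2, HE2.
  assert (Y <= 1). { unfold Y. rewrite <- exp_0. destruct (Req_dec t 0).
     rewrite H, Ropp_0. lra. left. apply exp_increasing. lra. }
  assert (X >= 1). { nra. }
  assert (H1 : 0 <= (X - Y) / 2) by lra.
  assert (H2 : (X - Y) / 2 <= t * X).
  { assert (HH : X * (1 - Y * Y) <= X * (2 * t)) by (apply Rmult_le_compat_l; lra).
    replace (X * (1 - Y * Y)) with (X - Y) in HH by (replace (X * (1 - Y * Y)) with (X - (X * Y) * Y) by ring; rewrite HXY; ring).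
    lra. }
  replace (t ^ 2 * (X * X)) with ((t * X) ^ 2) by ring.
  apply pow_incr. lra.
Qed.

Definition toC (z : Cplx) : Complex.C := (re z, im z).

Lemma Cabs_sinc w : Cabs (Csinc w) <= exp (Rabs (im w)).
Proof.
  assert (He : 1 <= exp (Rabs (im w))).
  { pose proof (exp_ineq1_le (Rabs (im w))). pose proof (Rabs_pos (im w)). lra. }
  assert (Main : re w <> 0 \/ im w <> 0 -> Cabs (Cdiv (Csin w) w) <= exp (Rabs (im w))).
  { intros Hw. destruct w as [a b]. simpl re in *; simpl im in *.
    set (N := a ^ 2 + b ^ 2).
    assert (HN : 0 < N).
    { unfold N. destruct Hw as [Hw|Hw]; [pose proof (pow2_gt_0 a Hw)| pose proof (pow2_gt_0 b Hw)];
      pose proof (pow2_ge_0 a); pose proof (pow2_ge_0 b); lra. }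
    change (Cabs (Cdiv (Csin (mkC a b)) (mkC a b))) with
      (Cmod (toC (Csin (mkC a b)) * / toC (mkC a b))%C).
    rewrite Cmod_mult, Cmod_inv.
    2:{ intro E. injection E. intros. destruct Hw; auto. }
    change (Cmod (toC (mkC a b))) with (sqrt N).
    assert (HsN : 0 < sqrt N) by (apply sqrt_lt_R0; auto).
    apply Rmult_le_reg_r with (sqrt N); auto.
    rewrite Rmult_assoc, Rinv_l, Rmult_1_r by lra.
    unfold toC, Csin, Cmod. simpl re; simpl im. simpl fst; simpl snd.
    rewrite <- (sqrt_pow2 (exp (Rabs b))) by (left; apply exp_pos).
    rewrite <- sqrt_mult_alt by (apply pow2_ge_0).
    apply sqrt_le_1_alt.
    assert (Hc : cosh b ^ 2 = 1 + sinh b ^ 2).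
    { unfold cosh, sinh. 
      assert (exp b * exp (- b) = 1) by (rewrite <- exp_plus, Rplus_opp_r, exp_0; auto).
      nra. }
    replace ((sin a * cosh b) ^ 2 + (cos a * sinh b) ^ 2) with
       (sin a ^ 2 + sinh b ^ 2 * (sin a ^ 2 + cos a ^ 2)) by (rewrite <- (Rmult_1_l (sin a ^ 2)) at 1; rewrite <- (Rmult_1_l (sin a ^ 2)) at 1; 
       replace ((sin a * cosh b) ^ 2) with (sin a ^ 2 * cosh b ^ 2) by ring; rewrite Hc; ring).
    assert (Hsc : sin a ^ 2 + cos a ^ 2 = 1) by (pose proof (sin2_cos2 a); unfold Rsqr in H; nra).
    rewrite Hsc, Rmult_1_r.
    assert (Hsa : sin a ^ 2 <= a ^ 2).
    { pose proof (sin_lip 0 a). rewrite sin_0, !Rminus_0_r in H.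
      rewrite <- (pow2_abs (sin a)), <- (pow2_abs a). apply pow_incr. split; auto. apply Rabs_pos. }
    pose proof (sinh_bound b).
    assert (HE : exp (Rabs b) ^ 2 = exp (2 * Rabs b)) by (simpl; rewrite Rmult_1_r, <- exp_plus; f_equal; ring).
    rewrite HE. unfold N.
    assert (1 <= exp (2 * Rabs b)) by (pose proof (exp_ineq1_le (2 * Rabs b)); pose proof (Rabs_pos b); lra).
    pose proof (pow2_ge_0 a). nra. }
  unfold Csinc. destruct (Req_EM_T (re w) 0); destruct (Req_EM_T (im w) 0).
  - unfold Cabs, RtoC; simpl. replace (1 * (1 * 1) + 0 * (0 * 1)) with 1 by ring. rewrite sqrt_1. auto.
  - apply Main; auto.
  - apply Main; auto.
  - apply Main; auto.
Qed.

Lemma poly_bound (A2 B2 c d : R) : 0 < c -> 0 < d -> 100 * d < c ->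
  (c - d / 2) ^ 2 <= A2 -> 0 <= B2 -> B2 <= d ^ 2 ->
  let K := 48672 / 10000 * d * c in
  0 <= K + (A2 - B2 - c ^ 2) /\
  (A2 - B2 - c ^ 2) ^ 2 + 4 * A2 * B2 <= (K + (A2 - B2 - c ^ 2)) ^ 2.
Proof.
  intros Hc Hd Hcd HA HB0 HB K.
  assert (HK : K = 48672 / 10000 * d * c) by reflexivity.
  assert (Hdd : d * d < d * c / 100) by nra.
  split.
  - assert ((c - d / 2) ^ 2 = c ^ 2 - c * d + d ^ 2 / 4) by field. nra.
  - assert (S1 : 0 <= 2 * K - 4 * B2) by nra.
    assert (S2 : (c - d / 2) ^ 2 * (2 * K - 4 * B2) <= A2 * (2 * K - 4 * B2)) by (apply Rmult_le_compat_r; auto).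
    assert (S3 : 0 <= K ^ 2 - 2 * K * (B2 + c ^ 2) + (c - d / 2) ^ 2 * (2 * K - 4 * B2)).
    { assert (S4 : K ^ 2 - 2 * K * (B2 + c ^ 2) + (c - d / 2) ^ 2 * (2 * K - 4 * B2) =
        (K ^ 2 - 2 * K * (d ^ 2 + c ^ 2) + (c - d / 2) ^ 2 * (2 * K - 4 * d ^ 2))
        + (d ^ 2 - B2) * (2 * K + 4 * (c - d / 2) ^ 2)) by ring.
      assert (S5 : 0 <= (d ^ 2 - B2) * (2 * K + 4 * (c - d / 2) ^ 2)).
      { apply Rmult_le_pos. lra. pose proof (pow2_ge_0 (c - d/2)). nra. }
      assert (S6 : K ^ 2 - 2 * K * (d ^ 2 + c ^ 2) + (c - d / 2) ^ 2 * (2 * K - 4 * d ^ 2) =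
         d ^ 2 * (c ^ 2 * ((48672 / 10000) ^ 2 - 2 * (48672 / 10000) - 4)
                  + d * c * (4 - 3 / 2 * (48672 / 10000)) - d ^ 2)) by (rewrite HK; field).
      assert (S7 : 0 <= c ^ 2 * ((48672 / 10000) ^ 2 - 2 * (48672 / 10000) - 4)
                  + d * c * (4 - 3 / 2 * (48672 / 10000)) - d ^ 2) by nra.
      assert (0 <= d ^ 2) by apply pow2_ge_0.
      rewrite S4, S6. pose proof (Rmult_le_pos _ _ H S7). lra. }
    nra.
Qed.

Lemma csqrt_bound (a b c d : R) : 0 < c -> 0 < d -> 100 * d < c -> c - d / 2 <= Rabs a -> Rabs b <= d ->
  Rabs (im (Csqrt (Csub (Cmul (mkC a b) (mkC a b)) (RtoC (c * c))))) <= 156 / 100 * sqrt (d * c).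
Proof.
  intros Hc Hd Hcd Ha Hb.
  set (u := Csub (Cmul (mkC a b) (mkC a b)) (RtoC (c * c))).
  assert (Hre : re u = a ^ 2 - b ^ 2 - c ^ 2) by (unfold u; simpl; ring).
  assert (Him : im u = 2 * a * b) by (unfold u; simpl; ring).
  assert (HA : (c - d / 2) ^ 2 <= a ^ 2).
  { rewrite <- (pow2_abs a). apply pow_incr. lra. }
  assert (HB : b ^ 2 <= d ^ 2).
  { rewrite <- (pow2_abs b). apply pow_incr. split; auto. apply Rabs_pos. }
  destruct (poly_bound (a ^ 2) (b ^ 2) c d Hc Hd Hcd HA (pow2_ge_0 b) HB) as [P1 P2].
  set (K := 48672 / 10000 * d * c) in *.
  assert (Hab : Cabs u <= K + re u).
  { unfold Cabs. rewrite Hre, Him. rewrite <- (sqrt_pow2 (K + _)) by auto.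
    apply sqrt_le_1_alt. replace ((2 * a * b) ^ 2) with (4 * a ^ 2 * b ^ 2) by ring. lra. }
  assert (Hs : Rabs (im (Csqrt u)) = sqrt ((Cabs u - re u) / 2)).
  { unfold Csqrt. simpl im. match goal with |- context [if ?x then _ else _] => destruct x end.
    - rewrite Rabs_mult. replace (Rabs (-1)) with 1 by (rewrite Rabs_left; lra). rewrite Rmult_1_l.
      apply Rabs_right. apply Rle_ge, sqrt_pos.
    - rewrite Rabs_mult, Rabs_R1, Rmult_1_l. apply Rabs_right. apply Rle_ge, sqrt_pos. }
  rewrite Hs.
  replace (156 / 100 * sqrt (d * c)) with (sqrt ((156 / 100) ^ 2 * (d * c))).
  2:{ rewrite sqrt_mult_alt by (apply pow2_ge_0). rewrite sqrt_pow2 by lra. auto. }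
  apply sqrt_le_1_alt. unfold K in Hab. lra.
Qed.

Lemma exp_mono x y : x <= y -> exp x <= exp y.
Proof. intros [H|H]. left; apply exp_increasing; auto. subst; lra. Qed.

Lemma logan_bound c d x : 0 < c -> 0 < d -> 100 * d < c -> c - d / 2 <= Rabs (re x) -> Rabs (im x) <= d ->
  Cabs (logan c x) <= c * exp (156 / 100 * sqrt (d * c)) / sinh c.
Proof.
  intros Hc Hd Hcd Ha Hb.
  assert (Hs : 0 < sinh c) by (rewrite <- sinh_0; apply sinh_lt; auto).
  unfold logan.
  set (w := Csinc (Csqrt (Csub (Cmul x x) (RtoC (c * c))))).
  change (Cabs (Cmul (RtoC (c / sinh c)) w)) with (Cmod (Complex.RtoC (c / sinh c) * toC w)%C).
  rewrite Cmod_mult, Cmod_R. change (Cmod (toC w)) with (Cabs w).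
  rewrite Rabs_right by (apply Rle_ge; apply Rlt_le; apply Rdiv_lt_0_compat; auto).
  assert (HW : Cabs w <= exp (156 / 100 * sqrt (d * c))).
  { eapply Rle_trans. apply Cabs_sinc. apply exp_mono.
    destruct x as [a b]. apply csqrt_bound; auto. }
  replace (c * exp (156 / 100 * sqrt (d * c)) / sinh c) with (c / sinh c * exp (156 / 100 * sqrt (d * c))) by (field; lra).
  apply Rmult_le_compat_l; auto.
  left. apply Rdiv_lt_0_compat; auto.
Qed.

Definition ofC (w : Complex.C) : Cplx := mkC (fst w) (snd w).

Lemma Cdiff_F (F : nat -> Cplx -> Cplx) : (forall k, is_Cderiv (F k) (F (S k))) ->
  forall k, Cdiff (fun w => toC (F k (ofC w))) (fun w => toC (F (S k) (ofC w))).
Proof.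
  intros H k w e He. destruct (H k (ofC w) e He) as [d [Hd Hh]].
  exists d. split; auto. intros h hne hlt.
  assert (hne' : ofC h <> RtoC 0).
  { intro E. apply hne. destruct h as [h1 h2]. unfold ofC, RtoC in E. simpl in E.
    injection E. intros -> ->. reflexivity. }
  exact (Hh (ofC h) hne' hlt).
Qed.

Theorem lemma4 (c eps delta : R) (z : Cplx) (n : nat) (F : nat -> Cplx -> Cplx) :
  0 < c -> 0 < eps -> eps <= delta -> delta < c / 100 ->
  c / eps <= Rabs (re z) -> Rabs (im z) <= 1 / 2 ->
  (forall x, F 0%nat x = logan_eps c eps x) ->
  (forall k, is_Cderiv (F k) (F (S k))) ->
  Cabs (F n z) <=
    INR (fact n) * (c * exp (156 / 100 * sqrt (delta * c)) / sinh c)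
    * (2 * eps / delta) ^ n.
Proof.
  intros Hc He Hed Hdc Hre Him HF0 HD.
  set (G := fun k w => toC (F k (ofC w))).
  assert (HG : forall k, Cdiff (G k) (G (S k))) by (apply Cdiff_F; auto).
  set (M := c * exp (156 / 100 * sqrt (delta * c)) / sinh c).
  set (r := delta / (2 * eps)).
  set (p := toC z).
  assert (Hd : 0 < delta) by lra.
  assert (Hr : 0 < r) by (unfold r; apply Rdiv_lt_0_compat; lra).
  assert (Hs : 0 < sinh c) by (rewrite <- sinh_0; apply sinh_lt; auto).
  assert (HM : 0 <= M).
  { unfold M. left. apply Rdiv_lt_0_compat; auto. apply Rmult_lt_0_compat; auto. apply exp_pos. }
  assert (HB : forall th, Cmod (G 0%nat (circ p r th)) <= M).
  { intros th. change (Cmod (G 0%nat (circ p r th))) with (Cabs (F 0%nat (ofC (circ p r th)))).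
    rewrite HF0. unfold logan_eps. apply logan_bound; try lra.
    - simpl. unfold r.
      replace (eps * (re z + delta / (2 * eps) * cos th) - 0 * (im z + delta / (2 * eps) * sin th))
        with (eps * re z + delta / 2 * cos th) by (field; lra).
      assert (H1 : c <= Rabs (eps * re z)).
      { rewrite Rabs_mult, Rabs_right by lra.
        apply Rmult_le_reg_l with (/ eps). apply Rinv_0_lt_compat; auto.
        rewrite <- Rmult_assoc, Rinv_l, Rmult_1_l by lra. rewrite Rmult_comm. auto. }
      assert (H2 : Rabs (delta / 2 * cos th) <= delta / 2).
      { rewrite Rabs_mult, Rabs_right by lra.
        assert (Rabs (cos th) <= 1) by (apply Rabs_le; apply COS_bound). nra. }
      pose proof (Rabs_triang_inv (eps * re z) (- (delta / 2 * cos th))).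
      rewrite Rabs_Ropp in H. replace (eps * re z - - (delta / 2 * cos th)) with (eps * re z + delta / 2 * cos th) in H by ring.
      lra.
    - simpl. unfold r.
      replace (eps * (im z + delta / (2 * eps) * sin th) + 0 * (re z + delta / (2 * eps) * cos th))
        with (eps * im z + delta / 2 * sin th) by (field; lra).
      eapply Rle_trans. apply Rabs_triang.
      rewrite !Rabs_mult, (Rabs_right eps), (Rabs_right (delta / 2)) by lra.
      assert (Rabs (sin th) <= 1) by (apply Rabs_le; apply SIN_bound).
      nra. }
  pose proof (cauchy G HG p r M Hr HM HB n) as HC.
  change (Cmod (G n p)) with (Cabs (F n (ofC (toC z)))) in HC.
  replace (ofC (toC z)) with z in HC by (destruct z; reflexivity).
  eapply Rle_trans. apply HC. fold M.
  right. replace (2 * eps / delta) with (/ r) by (unfold r; field; lra).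
  rewrite pow_inv. unfold Rdiv. ring.
Qed.
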